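(* Let $E$ be a finite-dimensional complex Hilbert space, $e\in E$ a unit vector, $\tau\in(0,1)$, and $T_0\in B(E)_+$. Define $$T_{n+1}:=T_n^{1/2}\bigl(I_E-\tau|e\rangle\langle e|\bigr)T_n^{1/2}\qquad(n\ge0),$$ and let $T_\infty:=\lim_n T_n$ (norm limit, which exists since $(T_n)$ is decreasing in the operator order). Let $Q:=I_E-|e\rangle\langle e|$ be the orthogonal projection onto $e^\perp$. With respect to $E=\mathbb{C}e\oplus e^\perp$ write $$T_n=\begin{pmatrix}a_n & b_n^*\\ b_n & B_n\end{pmatrix},$$ where $a_n:=\langle e,T_ne\rangle\ge0$, $b_n:=QT_ne\in e^\perp$, $B_n:=QT_nQ\in B(e^\perp)_+$, and set $y_n:=QT_n^{1/2}e\in e^\perp$. Then: (1) $a_{n+1}=(1-\tau)a_n+\tau\|y_n\|^2$ for every $n\ge0$. (2) $\tau\sum_{n=0}^\infty\|y_n\|^2=\mathrm{tr}(B_0-B_\infty)<\infty$, where $B_\infty:=QT_\infty Q$; in particular $y_n\to0$. (3) $a_n\to0$. (4) $b_n\to0$. Consequently, with respect to $E=\mathbb{C}e\oplus e^\perp$, $$T_\infty=\begin{pmatrix}0&0\\0&B_\infty\end{pmatrix},$$ equivalently $T_\infty e=0$ and $\mathrm{ran}(T_\infty)\subseteq e^\perp$.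
   Context: For vectors $x,y$, $|x\rangle\langle y|$ denotes the operator $z\mapsto\langle y,z\rangle x$. $B(E)_+$ denotes the positive operators on $E$; $T^{1/2}$ is the positive square root. *)

(* Defs.v *)
From HB Require Import structures.
From mathcomp Require Import all_boot all_order all_algebra.
From mathcomp Require Import complex.
From mathcomp Require Import all_classical all_reals all_analysis.

Set Implicit Arguments.
Unset Strict Implicit.
Unset Printing Implicit Defensive.

Import Order.TTheory GRing.Theory Num.Theory.
Import numFieldNormedType.Exports numFieldTopology.Exports.
Local Open Scope ring_scope.
Local Open Scope complex_scope.

(* E = C^(n.+1), vectors are column vectors 'cV_(n.+1), operators are
   matrices 'M_(n.+1) acting by left multiplication, inner product
   <x,y> = (x^* y) (antilinear in the first argument). *)

Definition adjmx (R : rcfType) m p (A : 'M[R[i]]_(m, p)) : 'M[R[i]]_(p, m) :=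
  (map_mx Num.conj A)^T.

Definition cdot (R : rcfType) m (x y : 'cV[R[i]]_m) : R[i] :=
  (adjmx x *m y) 0 0.

Definition normsq (R : rcfType) m (x : 'cV[R[i]]_m) : R :=
  \sum_(k < m) (complex.Re (x k 0) ^+ 2 + complex.Im (x k 0) ^+ 2).

Definition psdmx (R : rcfType) m (A : 'M[R[i]]_m) : Prop :=
  adjmx A = A /\ forall x : 'cV[R[i]]_m, 0 <= cdot x (A *m x).

Definition ketbra (R : rcfType) m (x y : 'cV[R[i]]_m) : 'M[R[i]]_m :=
  x *m adjmx y.

(* positive square root of a positive operator, via the spectral theorem:
   A = U^-1 diag(d) U with U unitary, and A^{1/2} = U^-1 diag(sqrt d) U *)
Definition sqrtmx (R : rcfType) m (A : 'M[R[i]]_m) : 'M[R[i]]_m :=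
  invmx (spectralmx A) *m diag_mx (map_mx sqrtC (spectral_diag A))
    *m spectralmx A.

Fixpoint Tseq (R : rcfType) m (T0 : 'M[R[i]]_m) (e : 'cV[R[i]]_m) (tau : R)
    (k : nat) : 'M[R[i]]_m :=
  match k with
  | 0 => T0
  | k'.+1 => let S := sqrtmx (Tseq T0 e tau k') in
             S *m (1%:M - tau%:C *: ketbra e e) *m S
  end.

HB.instance Definition _ (R : rcfType) :=
  PseudoPointedMetric.copy R[i] (R[i] : numClosedFieldType)^o.

(* Main.v *)
Require Import Defs.
From HB Require Import structures.
From mathcomp Require Import all_boot all_order all_algebra.
From mathcomp Require Import complex.
From mathcomp Require Import all_classical all_reals all_analysis.
From mathcomp Require Import ring lra.
Import Order.TTheory GRing.Theory Num.Theory.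
Import numFieldNormedType.Exports numFieldTopology.Exports.
Local Open Scope ring_scope.
Local Open Scope complex_scope.
Local Open Scope classical_set_scope.
Set Implicit Arguments.
Unset Strict Implicit.

Section Alg.
Variable R : rcfType.
Local Notation C := R[i].
Local Notation cj := (@Num.conj C).

Lemma adjmxE m p (A : 'M[C]_(m, p)) i j : adjmx A i j = cj (A j i).
Proof. by rewrite /adjmx !mxE. Qed.

Lemma adjmxK m p (A : 'M[C]_(m, p)) : adjmx (adjmx A) = A.
Proof. by apply/matrixP => i j; rewrite !adjmxE conjCK. Qed.

Lemma adjmxM m p q (A : 'M[C]_(m, p)) (B : 'M[C]_(p, q)) :
  adjmx (A *m B) = adjmx B *m adjmx A.
Proof.
apply/matrixP => i j; rewrite !adjmxE !mxE rmorph_sum; apply: eq_bigr => k _.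
by rewrite rmorphM !adjmxE mulrC.
Qed.

Lemma adjmxD m p (A B : 'M[C]_(m, p)) : adjmx (A + B) = adjmx A + adjmx B.
Proof. by apply/matrixP => i j; rewrite /adjmx !mxE rmorphD. Qed.

Lemma adjmxN m p (A : 'M[C]_(m, p)) : adjmx (- A) = - adjmx A.
Proof. by apply/matrixP => i j; rewrite /adjmx !mxE rmorphN. Qed.

Lemma adjmxB m p (A B : 'M[C]_(m, p)) : adjmx (A - B) = adjmx A - adjmx B.
Proof. by rewrite adjmxD adjmxN. Qed.

Lemma adjmxZ m p (c : C) (A : 'M[C]_(m, p)) : adjmx (c *: A) = cj c *: adjmx A.
Proof. by apply/matrixP => i j; rewrite /adjmx !mxE rmorphM. Qed.

Lemma adjmx1 m : adjmx (1%:M : 'M[C]_m) = 1%:M.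
Proof. by apply/matrixP => i j; rewrite !adjmxE !mxE eq_sym rmorph_nat. Qed.

Lemma conj_realC (r : R) : cj (r%:C) = r%:C.
Proof. exact: conjc_real. Qed.

Lemma adjmx_real m (r : R) : adjmx ((r%:C)%:M : 'M[C]_m) = (r%:C)%:M.
Proof.
apply/matrixP => i j; rewrite !adjmxE !mxE eq_sym rmorphMn; congr (_ *+ _); exact: conjc_real.

Qed.

Lemma mx11E (M : 'M[C]_1) : M = (M 0 0)%:M.
Proof. by apply/matrixP => i j; rewrite !ord1 mxE eqxx mulr1n. Qed.

Lemma mulmx11 (A B : 'M[C]_1) : (A *m B) 0 0 = A 0 0 * B 0 0.
Proof. by rewrite mxE big_ord1. Qed.

Lemma cdotE m (x y : 'cV[C]_m) : cdot x y = (adjmx x *m y) 0 0.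
Proof. by []. Qed.

Lemma cdotC m (x y : 'cV[C]_m) : cdot y x = cj (cdot x y).
Proof.
rewrite !cdotE -[in RHS]adjmxE adjmxM adjmxK.
by [].
Qed.

Lemma normsq_ge0 m (x : 'cV[C]_m) : 0 <= normsq x.
Proof. by apply: sumr_ge0 => k _; rewrite addr_ge0 // sqr_ge0. Qed.

Lemma cdot_normsq m (x : 'cV[C]_m) : cdot x x = (normsq x)%:C.
Proof.
rewrite cdotE mxE /normsq rmorph_sum; apply: eq_bigr => k _.
by rewrite adjmxE -normCKC -add_Re2_Im2.
Qed.

Lemma cdot_ge0 m (x : 'cV[C]_m) : 0 <= cdot x x.
Proof. by rewrite cdot_normsq ler0c normsq_ge0. Qed.


Local Open Scope sesquilinear_scope.

Lemma tstar_adj m p (M : 'M[C]_(m, p)) : M ^t* = adjmx M.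
Proof. by apply/matrixP => i j; rewrite !mxE. Qed.

Lemma adj_delta m p (i : 'I_m) (j : 'I_p) :
  adjmx (delta_mx i j : 'M[C]_(m, p)) = delta_mx j i.
Proof. by apply/matrixP => a b; rewrite adjmxE !mxE rmorph_nat andbC. Qed.

Lemma psd_herm m (A : 'M[C]_m) : psdmx A -> adjmx A = A.
Proof. by case. Qed.

Lemma sqrtmx_spec m (A : 'M[C]_m) : psdmx A ->
  adjmx (sqrtmx A) = sqrtmx A /\ sqrtmx A *m sqrtmx A = A.
Proof.
move=> [hA pA].
have nA : A \is normalmx by apply/normalmxP; rewrite tstar_adj hA.
have eA := orthomx_spectralP nA.
set P := spectralmx A in eA *; set d := spectral_diag A in eA *.
have uP : P \is unitarymx := spectral_unitarymx A.
have iP : invmx P = adjmx P by rewrite invmx_unitary // tstar_adj.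
have PV : P *m adjmx P = 1%:M by rewrite -iP mulmxV // spectral_unit.
have VP : adjmx P *m P = 1%:M by rewrite -iP mulVmx // spectral_unit.
have dge0 : forall i, 0 <= d 0 i.
  move=> i; have := pA (adjmx P *m delta_mx i 0).
  rewrite /cdot adjmxM adjmxK adj_delta eA iP.
  rewrite !mulmxA -!mulmxA (mulmxA P) PV mul1mx (mulmxA P) PV mul1mx.
  by rewrite mulmxA -rowE -colE !mxE eqxx mulr1n.

rewrite /sqrtmx -/P -/d iP.
set s := map_mx sqrtC d.
have sR : forall i, cj (sqrtC (d 0 i)) = sqrtC (d 0 i).
  by move=> i; rewrite geC0_conj // sqrtC_ge0.
have ss : diag_mx s *m diag_mx s = diag_mx d.
  apply/matrixP => i j; rewrite mul_diag_mx !mxE.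
  case: eqP => [->|_]; last by rewrite mulr0n mulr0.
  by rewrite mulr1n -expr2 sqrtCK.
have sa : adjmx (diag_mx s) = diag_mx s.
  apply/matrixP => i j; rewrite adjmxE !mxE eq_sym.
  by case: eqP => [->|_]; rewrite ?mulr1n ?mulr0n ?rmorph0 ?sR.
split.
  by rewrite !adjmxM adjmxK sa mulmxA.
rewrite !mulmxA -[adjmx P *m diag_mx s *m P *m adjmx P]mulmxA PV mulmx1.
by rewrite -[adjmx P *m diag_mx s *m diag_mx s]mulmxA ss -iP -eA.
Qed.

End Alg.

HB.instance Definition _ (R : rcfType) :=
  NormedModule.copy R[i] (R[i] : numClosedFieldType)^o.

Section An.
Variable R : realType.
Local Notation C := R[i].

Lemma normC_real (r : R) : `|r%:C| = `|r|%:C.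
Proof. by rewrite normc_def /= expr0n /= addr0 sqrtr_sqr. Qed.

Lemma ltC_real (z : C) : 0 < z -> z = (complex.Re z)%:C /\ 0 < complex.Re z.
Proof.
move=> z0; have /RRe_real -> := gtr0_real z0; split => //.
by move: z0; rewrite ltcE => /andP[_]; rewrite /=.
Qed.

Lemma cvgC (u : nat -> R) (l : R) : u @ \oo --> l -> (fun k => (u k)%:C) @ \oo --> l%:C.
Proof.
move=> /cvgrPdist_lt h; apply/cvgrPdist_lt => eps /ltC_real [-> e0].
near=> k; rewrite -rmorphB normC_real ltcR.
by near: k; apply: h.
Unshelve. all: by end_near. Qed.

Lemma cvgRe (u : nat -> C) (l : C) : u @ \oo --> l ->
  (fun k => complex.Re (u k)) @ \oo --> complex.Re l.
Proof.
move=> /cvgrPdist_lt h; apply/cvgrPdist_lt => eps e0.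
have e0' : 0 < eps%:C by rewrite ltcR.
near=> k; rewrite -ltcR -raddfB /=.
apply: le_lt_trans (normc_ge_Re _) _.
by near: k; apply: h.
Unshelve. all: by end_near. Qed.

Lemma cvgJ (u : nat -> C) (l : C) : u @ \oo --> l ->
  (fun k => Num.conj (u k)) @ \oo --> Num.conj l.
Proof.
move=> /cvgrPdist_lt h; apply/cvgrPdist_lt => eps e0.
near=> k; rewrite -rmorphB normcJ.
by near: k; apply: h.
Unshelve. all: by end_near. Qed.


Lemma cvg_mx p q (M : nat -> 'M[C]_(p, q)) (L : 'M[C]_(p, q)) :
  (forall i j, (fun k => M k i j) @ \oo --> L i j) -> M @ \oo --> L.
Proof.
move=> h A [P PL sPA].
have H : \forall k \near \oo, forall i j, P i j (M k i j).
  apply: filter_forall => i; apply: filter_forall => j.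
  exact: (h i j (P i j) (PL i j)).
by apply: filterS H => k hk; apply: sPA.
Qed.

Lemma cvg_coord p q (M : nat -> 'M[C]_(p, q)) (L : 'M[C]_(p, q)) i j :
  M @ \oo --> L -> (fun k => M k i j) @ \oo --> L i j.
Proof.
move=> h; exact: (continuous_cvg _ (@coord_continuous _ _ _ i j L) h).
Qed.

Lemma cvg_sumC (I : finType) (f : I -> nat -> C) (l : I -> C) :
  (forall i, f i @ \oo --> l i) ->
  (fun k => \sum_i f i k) @ \oo --> \sum_i l i.
Proof.
move=> h; apply: cvg_big => //; exact: add_continuous.
Qed.

Lemma cvg_lin p q r s (A : 'M[C]_(r, p)) (B : 'M[C]_(q, s))
  (M : nat -> 'M[C]_(p, q)) (L : 'M[C]_(p, q)) :
  M @ \oo --> L -> (fun k => A *m M k *m B) @ \oo --> A *m L *m B.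
Proof.
move=> h; apply: cvg_mx => i j; rewrite mxE.
under eq_cvg do rewrite mxE.
apply: cvg_sumC => b; rewrite mxE.
under eq_cvg do rewrite mxE.
apply: cvgMl; apply: cvg_sumC => a.
apply: cvgMr; exact: cvg_coord.
Qed.

Lemma cvg_trace p (M : nat -> 'M[C]_p) (L : 'M[C]_p) :
  M @ \oo --> L -> (fun k => \tr (M k)) @ \oo --> \tr L.
Proof. by move=> h; apply: cvg_sumC => i; exact: cvg_coord. Qed.


Lemma cvg0_sq (z : nat -> C) (r : nat -> R) :
  r @ \oo --> 0 -> (forall k, `|z k| ^+ 2 <= (r k)%:C) -> z @ \oo --> 0.
Proof.
move=> /cvgrPdist_lt hr hz; apply/cvgrPdist_lt => eps /ltC_real [epsE e0].
rewrite epsE; set e := complex.Re eps in e0 *.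
have e20 : 0 < e ^+ 2 by rewrite exprn_gt0.
near=> k; rewrite sub0r normrN -ltr_sqr ?nnegrE ?normr_ge0 ?ler0c ?(ltW e0) //.
apply: le_lt_trans (hz k) _; rewrite -rmorphXn ltcR.
rewrite (le_lt_trans (ler_norm _)) //; near: k.
by apply: filterS (hr _ e20) => k; rewrite sub0r normrN.
Unshelve. all: by end_near. Qed.

Lemma normsq_entry m (v : 'cV[C]_m) i : `|v i 0| ^+ 2 <= (normsq v)%:C.
Proof.
rewrite -add_Re2_Im2 lecR /normsq (bigD1 i) //= lerDl.
by apply: sumr_ge0 => k _; rewrite addr_ge0 // sqr_ge0.
Qed.

Lemma quad_zero (a b : R) : (forall t, 0 <= 2 * t * a + t ^+ 2 * b) -> a = 0.
Proof.
move=> h; set d := `|b| + 1.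
have d0 : 0 < d by rewrite /d ltr_pwDr // normr_ge0.
have := h (- a / d).
have -> : 2 * (- a / d) * a + (- a / d) ^+ 2 * b = a ^+ 2 / d ^+ 2 * (b - 2 * d).
  by field; rewrite gt_eqF.
have hn : b - 2 * d < 0.
  by rewrite /d; have hb := ler_norm b; have hb0 := normr_ge0 b; lra.
move=> hp; rewrite nmulr_lge0 // in hp.
have : a ^+ 2 / d ^+ 2 == 0.
  by rewrite eq_le hp divr_ge0 ?sqr_ge0.
by rewrite mulf_eq0 invr_eq0 !expf_eq0 /= (gt_eqF d0) orbF => /eqP.
Qed.

End An.

Section Main.
Variable R : realType.
Local Notation C := R[i].
Local Notation cj := (@Num.conj C).
Variables (n : nat) (e : 'cV[C]_n.+1) (tau : R) (T0 : 'M[C]_n.+1).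
Hypothesis he : cdot e e = 1.
Hypothesis ht : 0 < tau < 1.
Hypothesis hT0 : psdmx T0.
Local Notation T := (Tseq T0 e tau).
Local Notation Q := (1%:M - ketbra e e : 'M[C]_n.+1).

Lemma ee1 : adjmx e *m e = 1%:M.
Proof. by rewrite [LHS]mx11E -/(cdot e e) he. Qed.

Lemma adj_ketbra m (x y : 'cV[C]_m) : adjmx (ketbra x y) = ketbra y x.
Proof. by rewrite /ketbra adjmxM adjmxK. Qed.

Lemma Qadj : adjmx Q = Q.
Proof. by rewrite adjmxB adjmx1 adj_ketbra. Qed.

Lemma QQ : Q *m Q = Q.
Proof.
rewrite mulmxBl mul1mx mulmxBr mulmx1 /ketbra.
rewrite mulmxA -[e *m adjmx e *m e]mulmxA ee1 mulmx1.
by rewrite subrr subr0.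
Qed.

Lemma cdot_ketbra m (x y z v : 'cV[C]_m) :
  cdot x (ketbra y z *m v) = cdot x y * cdot z v.
Proof. by rewrite /cdot /ketbra !mulmxA -mulmx11 !mulmxA. Qed.

Lemma cdotBr m (x y z : 'cV[C]_m) : cdot x (y - z) = cdot x y - cdot x z.
Proof. by rewrite /cdot mulmxBr !mxE. Qed.

Lemma cdotZr m (x y : 'cV[C]_m) c : cdot x (c *: y) = c * cdot x y.
Proof. by rewrite /cdot -scalemxAr [X in X = _]mxE. Qed.

Lemma cdot_M (c : C) v :
  cdot v ((1%:M - c *: ketbra e e) *m v) = cdot v v - c * (cdot v e * cdot e v).
Proof.
by rewrite mulmxBl mul1mx cdotBr -scalemxAl cdotZr cdot_ketbra.
Qed.

Lemma pyth v : cdot v v = cdot v e * cdot e v + cdot (Q *m v) (Q *m v).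
Proof.
have -> : cdot (Q *m v) (Q *m v) = cdot v (Q *m v).
  by rewrite /cdot adjmxM Qadj -!mulmxA (mulmxA Q) QQ.
by have := cdot_M 1 v; rewrite scale1r mul1r => ->; rewrite addrC subrK.
Qed.


Lemma cdot_adjmx m (A : 'M[C]_m) x y : cdot x (A *m y) = cdot (adjmx A *m x) y.
Proof. by rewrite /cdot adjmxM adjmxK mulmxA. Qed.

Lemma cdot_conj_ge0 v : 0 <= cdot v e * cdot e v.
Proof. by rewrite (cdotC e v) -normCKC exprn_ge0. Qed.

Lemma psd_step A : psdmx A ->
  psdmx (sqrtmx A *m (1%:M - tau%:C *: ketbra e e) *m sqrtmx A).
Proof.
move=> hA; have [Sa SS] := sqrtmx_spec hA.
set S := sqrtmx A in Sa SS *; clearbody S; set M := (1%:M - _).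
have Ma : adjmx M = M by rewrite adjmxB adjmx1 adjmxZ conj_realC adj_ketbra.
split; first by rewrite !adjmxM Sa Ma mulmxA.
move=> x; rewrite -!mulmxA cdot_adjmx Sa cdot_M.
set v := S *m x; rewrite {1}pyth.
have -> : cdot v e * cdot e v + cdot (Q *m v) (Q *m v) -
    tau%:C * (cdot v e * cdot e v) =
    (1 - tau)%:C * (cdot v e * cdot e v) + cdot (Q *m v) (Q *m v).
  by rewrite rmorphB rmorph1; ring.
apply: addr_ge0; last exact: cdot_ge0.
apply: mulr_ge0; last exact: cdot_conj_ge0.
by rewrite ler0c subr_ge0; case/andP: ht => _ /ltW.
Qed.

Lemma Tpsd k : psdmx (T k).
Proof. by elim: k => [|k IH] //=; apply: psd_step. Qed.


Lemma stepT k : T k.+1 =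
  T k - tau%:C *: ketbra (sqrtmx (T k) *m e) (sqrtmx (T k) *m e).
Proof.
have [Sa SS] := sqrtmx_spec (Tpsd k).
rewrite [T k.+1]/=; set S := sqrtmx (T k) in Sa SS *; clearbody S.
rewrite mulmxBr mulmxBl mulmx1 SS -scalemxAr -scalemxAl /ketbra adjmxM Sa.
by rewrite !mulmxA.
Qed.

Lemma part1 k : cdot e (T k.+1 *m e) =
  (1 - tau)%:C * cdot e (T k *m e) +
  tau%:C * (normsq (Q *m sqrtmx (T k) *m e))%:C.
Proof.
have [Sa SS] := sqrtmx_spec (Tpsd k).
rewrite stepT mulmxBl cdotBr -scalemxAl cdotZr cdot_ketbra.
set S := sqrtmx (T k) in Sa SS *; clearbody S.
rewrite -[Q *m S *m e]mulmxA -cdot_normsq.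
have -> : cdot e (T k *m e) = cdot (S *m e) (S *m e).
  by rewrite -SS -mulmxA cdot_adjmx Sa.
rewrite [cdot (S *m e) (S *m e)]pyth (cdotC e (S *m e)).
rewrite rmorphB rmorph1; ring.
Qed.

Lemma trace_step k : \tr (Q *m T k *m Q) - \tr (Q *m T k.+1 *m Q) =
  (tau * normsq (Q *m sqrtmx (T k) *m e))%:C.
Proof.
have E (A B : 'M[C]_n.+1) : \tr A - \tr B = \tr (A - B) by rewrite raddfB.
rewrite E -mulmxBl -mulmxBr stepT subKr.
set S := sqrtmx (T k); clearbody S; rewrite -[Q *m S *m e]mulmxA.
set w := S *m e; clearbody w.
rewrite -scalemxAr -scalemxAl mxtraceZ.
have -> : Q *m ketbra w w *m Q = ketbra (Q *m w) (Q *m w).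
  by rewrite [ketbra w w]/ketbra [ketbra (Q *m w) _]/ketbra adjmxM Qadj !mulmxA.
rewrite [ketbra (Q *m w) _]/ketbra mxtrace_mulC trace_mx11 -/(cdot _ _) cdot_normsq.
by rewrite rmorphM.
Qed.


Lemma ge0_real (z : C) : 0 <= z -> z = (complex.Re z)%:C /\ 0 <= complex.Re z.
Proof.
move=> z0; have /RRe_real -> := ger0_real z0; split => //.
by move: z0; rewrite lecE => /andP[_]; rewrite /=.
Qed.

Lemma q_step k z : cdot z (T k.+1 *m z) <= cdot z (T k *m z).
Proof.
rewrite stepT mulmxBl cdotBr -scalemxAl cdotZr cdot_ketbra.
rewrite lerBlDr lerDl; apply: mulr_ge0; first by rewrite ler0c; case/andP: ht => /ltW.
by rewrite (cdotC z) mulrC -normCKC exprn_ge0.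
Qed.

Definition rho z k := complex.Re (cdot z (T k *m z)).

Lemma rhoE z k : cdot z (T k *m z) = (rho z k)%:C.
Proof. by have [+ _] := ge0_real (proj2 (Tpsd k) z). Qed.

Lemma rho_ge0 z k : 0 <= rho z k.
Proof. by have [_ +] := ge0_real (proj2 (Tpsd k) z). Qed.


Lemma rho_cvg z : cvg (rho z @ \oo).
Proof.
apply: nonincreasing_is_cvgn.
  by apply/nonincreasing_seqP => k; rewrite -lecR -!rhoE q_step.
by exists 0 => _ [k _ <-]; exact: rho_ge0.
Qed.

Lemma q_cvg z : cvg ((fun k => cdot z (T k *m z)) @ \oo).
Proof.
have -> : (fun k => cdot z (T k *m z)) = (fun k => (rho z k)%:C).
  by apply: funext => k; rewrite rhoE.
apply/cvg_ex; exists (lim (rho z @ \oo))%:C.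
apply: cvgC; exact: rho_cvg.
Qed.


Lemma cdotDl m (x y z : 'cV[C]_m) : cdot (x + y) z = cdot x z + cdot y z.
Proof. by rewrite /cdot adjmxD mulmxDl !mxE. Qed.

Lemma cdotDr m (x y z : 'cV[C]_m) : cdot x (y + z) = cdot x y + cdot x z.
Proof. by rewrite /cdot mulmxDr !mxE. Qed.

Lemma cdotZl m (x y : 'cV[C]_m) c : cdot (c *: x) y = cj c * cdot x y.
Proof. by rewrite /cdot adjmxZ -scalemxAl mxE. Qed.

Lemma cdot_expand m (A : 'M[C]_m) x y c :
  cdot (x + c *: y) (A *m (x + c *: y)) = cdot x (A *m x) + c * cdot x (A *m y)
    + cj c * cdot y (A *m x) + cj c * c * cdot y (A *m y).
Proof.
rewrite mulmxDr -scalemxAr !cdotDl !cdotDr !cdotZl !cdotZr; ring.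
Qed.

Lemma conj_i : cj 'i = - 'i.
Proof. by apply/eqP; rewrite eq_complex /= oppr0 !eqxx. Qed.

Lemma i_neq0 : 'i != 0 :> C.
Proof. by apply/eqP => /eqP; rewrite eq_complex /= oner_eq0 andbF. Qed.

Lemma polar m (A : 'M[C]_m) x y (j : C) : cj j = - j -> j != 0 ->
  cdot x (A *m y) = (4 * j)^-1 * (j * (cdot (x + 1 *: y) (A *m (x + 1 *: y))
     - cdot (x + (-1) *: y) (A *m (x + (-1) *: y)))
   + (cdot (x + j *: y) (A *m (x + j *: y))
     - cdot (x + (- j) *: y) (A *m (x + (- j) *: y)))).
Proof.
move=> cj_j j0.
have c1 : cj 1 = 1 by apply/eqP; rewrite eq_complex /= oppr0 !eqxx.
have cm1 : cj (-1) = -1 by apply/eqP; rewrite eq_complex /= !oppr0 !eqxx.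
have cmj : cj (- j) = j.
  have -> : cj (- j) = - cj j by exact: rmorphN.
  by rewrite cj_j opprK.
rewrite !cdot_expand c1 cm1 cmj cj_j.
have h4 : 4 * j != 0 by rewrite mulf_neq0 // pnatr_eq0.
apply: (mulfI h4); rewrite mulrA mulfV // mul1r.
move: (cdot x (A *m x)) (cdot x (A *m y)) (cdot y (A *m x)) (cdot y (A *m y)).
move=> a b c d; ring.
Qed.

Lemma entry_cdot (A : 'M[C]_n.+1) i j :
  A i j = cdot (delta_mx i 0) (A *m delta_mx j 0).
Proof. by rewrite /cdot adj_delta -colE -rowE !mxE. Qed.

Lemma entries_cvg i j : cvg ((fun k => T k i j) @ \oo).
Proof.
apply/cvg_ex; eexists.
under eq_cvg do rewrite entry_cdot (polar _ _ _ conj_i i_neq0).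
apply: cvgMr; apply: cvgD; [apply: cvgMr|]; apply: cvgB; exact: q_cvg.
Qed.

Lemma T_cvg : cvg (T @ \oo).
Proof.
apply/cvg_ex; exists (\matrix_(i, j) lim ((fun k => T k i j) @ \oo)).
by apply: cvg_mx => i j; rewrite mxE; exact: entries_cvg.
Qed.


Lemma uniqC (u : nat -> C) (a b : C) : u @ \oo --> a -> u @ \oo --> b -> a = b.
Proof. by move=> ha hb; rewrite -(cvg_lim _ ha) // -(cvg_lim _ hb). Qed.

Lemma lim_ge0 (u : nat -> R) (l : R) : u @ \oo --> l -> (forall k, 0 <= u k) -> 0 <= l.
Proof.
move=> h hu; rewrite -(cvg_lim _ h) //; apply: limr_ge; first exact: cvgP h.
exact: nearW.
Qed.

Lemma adjmx0 p q : adjmx (0 : 'M[C]_(p, q)) = 0.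
Proof. by apply/matrixP => i j; rewrite adjmxE !mxE rmorph0. Qed.

Definition Tinf := lim (T @ \oo).

Lemma TinfP : T @ \oo --> Tinf.
Proof. exact: T_cvg. Qed.

Lemma Tinf_herm : adjmx Tinf = Tinf.
Proof.
apply/matrixP => i j; rewrite adjmxE.
apply: (@uniqC (fun k => T k i j)); last exact: cvg_coord TinfP.
have -> : (fun k => T k i j) = (fun k => cj (T k j i)).
  by apply: funext => k; rewrite -{1}(proj1 (Tpsd k)) adjmxE.
by apply: cvgJ; exact: cvg_coord TinfP.
Qed.

Lemma cdot_cvg x y : (fun k => cdot x (T k *m y)) @ \oo --> cdot x (Tinf *m y).
Proof.
rewrite /cdot; under eq_cvg do rewrite mulmxA.
rewrite mulmxA; apply: cvg_coord; exact: cvg_lin TinfP.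
Qed.

Lemma Tinf_pos x : 0 <= complex.Re (cdot x (Tinf *m x)).
Proof.
apply: (@lim_ge0 (rho x)); last exact: rho_ge0.
by have := cvgRe (cdot_cvg (x:=x) (y:=x)); apply.
Qed.


Local Notation y k := (Q *m sqrtmx (T k) *m e).
Local Notation u := (fun k => tau * normsq (y k)).

Lemma alpha_rec k : rho e k.+1 = (1 - tau) * rho e k + tau * normsq (y k).
Proof.
apply: complexI.
have -> : ((1 - tau) * rho e k + tau * normsq (y k))%:C =
    (1 - tau)%:C * (rho e k)%:C + tau%:C * (normsq (y k))%:C.
  by rewrite rmorphD !rmorphM.
by rewrite -!rhoE part1.
Qed.

Lemma seriesS (v : nat -> R) N : series v N.+1 = series v N + v N.
Proof. by rewrite -(seriesSB v N) addrC subrK. Qed.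

Lemma series_tr N : (series u N)%:C = \tr (Q *m T 0 *m Q) - \tr (Q *m T N *m Q).
Proof.
elim: N => [|N IH].
  by rewrite /series /= big_geq // subrr.
rewrite seriesS /=.
have -> : (series u N + tau * normsq (y N))%:C =
    (series u N)%:C + (tau * normsq (y N))%:C by rewrite rmorphD.
rewrite IH -trace_step; ring.
Qed.

Definition Binf := Q *m Tinf *m Q.

Lemma seriesC_cvg : (fun N => (series u N)%:C) @ \oo -->
  \tr (Q *m T 0 *m Q) - \tr Binf.
Proof.
have -> : (fun N => (series u N)%:C) =
    (fun N => \tr (Q *m T 0 *m Q) - \tr (Q *m T N *m Q)).
  by apply: funext => N; rewrite series_tr.
apply: cvgB; first exact: cvg_cst.
apply: cvg_trace; exact: cvg_lin TinfP.
Qed.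

Lemma series_cvg : cvg (series u @ \oo).
Proof. by apply/cvg_ex; eexists; apply: (cvgRe seriesC_cvg). Qed.

Lemma series_lim : (limn (series u))%:C = \tr (Q *m T 0 *m Q - Binf).
Proof.
rewrite raddfB /=; apply: uniqC seriesC_cvg.
exact: cvgC series_cvg.
Qed.


Lemma tau_gt0 : 0 < tau. Proof. by case/andP: ht. Qed.

Lemma beta_cvg0 : (fun k => normsq (y k)) @ \oo --> 0.
Proof.
have h := cvg_series_cvg_0 series_cvg.
have -> : (fun k => normsq (y k)) = (fun k => tau^-1 * u k).
  by apply: funext => k; rewrite mulrA mulVf ?mul1r // gt_eqF // tau_gt0.
by rewrite -(mulr0 tau^-1); apply: cvgMr.
Qed.

Lemma y_cvg0 : (fun k => y k) @ \oo --> (0 : 'cV[C]_n.+1).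
Proof.
apply: cvg_mx => i j; rewrite mxE.
apply: (cvg0_sq beta_cvg0) => k.
by rewrite (ord1 j); exact: normsq_entry.
Qed.

Lemma alpha_sum N : tau * series (rho e) N + rho e N = rho e 0 + series u N.
Proof.
elim: N => [|N IH]; first by rewrite /series /= !big_geq // mulr0 add0r addr0.
rewrite !seriesS /= alpha_rec.
have -> : tau * (series (rho e) N + rho e N) +
   ((1 - tau) * rho e N + tau * normsq (y N)) =
   (tau * series (rho e) N + rho e N) + tau * normsq (y N) by ring.
by rewrite IH addrA.
Qed.

Lemma alpha_cvg0 : rho e @ \oo --> 0.
Proof.
apply: cvg_series_cvg_0.
have hnd : nondecreasing_seq (series u).
  by apply/nondecreasing_seqP => N; rewrite seriesS lerDl mulr_ge0 ?normsq_ge0 // ltW // tau_gt0.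
apply: nondecreasing_is_cvgn.
  by apply/nondecreasing_seqP => N; rewrite seriesS lerDl rho_ge0.
exists ((rho e 0 + limn (series u)) / tau) => _ [N _ <-].
rewrite ler_pdivlMr ?tau_gt0 // mulrC.
have := alpha_sum N; have := rho_ge0 e N.
have := nondecreasing_cvgn_le hnd series_cvg N.
move=> h1 h2 h3; lra.
Qed.

Lemma a_cvg0 : (fun k => cdot e (T k *m e)) @ \oo --> 0.
Proof.
have -> : (fun k => cdot e (T k *m e)) = (fun k => (rho e k)%:C).
  by apply: funext => k; rewrite rhoE.
exact: cvgC alpha_cvg0.
Qed.


Lemma ReC (a b : R) (w : C) : complex.Re (a%:C + b%:C * w) = a + b * complex.Re w.
Proof. by case: w => x z /=; rewrite mul0r subr0. Qed.

Lemma normsq_eq0 m (v : 'cV[C]_m) : normsq v = 0 -> v = 0.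
Proof.
move=> h; apply/matrixP => i j; rewrite (ord1 j) mxE.
have := normsq_entry v i; rewrite h => h2.
have : `|v i 0| ^+ 2 == 0 by rewrite eq_le h2 exprn_ge0.
by rewrite expf_eq0 /= normr_eq0 => /eqP.
Qed.

Lemma Tinf_e0 : Tinf *m e = 0.
Proof.
have a0 : cdot e (Tinf *m e) = 0 := uniqC (cdot_cvg (x:=e) (y:=e)) a_cvg0.
set v := Tinf *m e.
have h1 : cdot v (Tinf *m e) = (normsq v)%:C by rewrite -cdot_normsq.
have h2 : cdot e (Tinf *m v) = (normsq v)%:C.
  by rewrite cdot_adjmx Tinf_herm -cdot_normsq.
apply: normsq_eq0; apply: (@quad_zero _ _ (complex.Re (cdot v (Tinf *m v)))) => t.
have := Tinf_pos (e + t%:C *: v); rewrite cdot_expand a0 h1 h2 conj_realC.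
have -> : 0 + t%:C * (normsq v)%:C + t%:C * (normsq v)%:C +
    t%:C * t%:C * cdot v (Tinf *m v) =
    (2 * t * normsq v)%:C + (t ^+ 2)%:C * cdot v (Tinf *m v).
  have E1 : (2 * t * normsq v)%:C = 2 * t%:C * (normsq v)%:C.
    by rewrite !rmorphM rmorph_nat.
  have E2 : (t ^+ 2)%:C = t%:C ^+ 2 by rewrite rmorphXn.
  rewrite E1 E2; ring.
by rewrite ReC.
Qed.

Lemma eTinf0 : adjmx e *m Tinf = 0.
Proof. by rewrite -Tinf_herm -adjmxM Tinf_e0 adjmx0. Qed.

Lemma Tinf_Q : Tinf = Binf.
Proof.
rewrite /Binf mulmxBl mul1mx mulmxBr mulmx1 /ketbra.
by rewrite -mulmxA eTinf0 mulmx0 subr0 mulmxA Tinf_e0 mul0mx subr0.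
Qed.

Lemma b_cvg0 : (fun k => Q *m T k *m e) @ \oo --> (0 : 'cV[C]_n.+1).
Proof.
have := cvg_lin (A:=Q) (B:=e) TinfP.
by rewrite -mulmxA Tinf_e0 mulmx0.
Qed.

End Main.

Theorem proposition3p1 (R : realType) (n : nat)
  (e : 'cV[R[i]]_n.+1) (tau : R) (T0 : 'M[R[i]]_n.+1) :
  cdot e e = 1 -> 0 < tau < 1 -> psdmx T0 ->
  let T := Tseq T0 e tau in
  let Q : 'M[R[i]]_n.+1 := 1%:M - ketbra e e in
  let a := fun k => cdot e (T k *m e) in
  let b := fun k => Q *m T k *m e in
  let B := fun k => Q *m T k *m Q in
  let y := fun k => Q *m sqrtmx (T k) *m e in
  cvg (T @ \oo) /\
  let Tinf := lim (T @ \oo) in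
  let Binf := Q *m Tinf *m Q in
  (* (1) *)
  (forall k, a k.+1 = (1 - tau)%:C * a k + tau%:C * (normsq (y k))%:C) /\
  (* (2) *)
  cvg (series (fun k => tau * normsq (y k)) @ \oo) /\
  (limn (series (fun k => tau * normsq (y k))))%:C = \tr (B 0%N - Binf) /\
  (y @ \oo --> (0 : 'cV[R[i]]_n.+1)) /\
  (* (3) *)
  (a @ \oo --> 0) /\
  (* (4) *)
  (b @ \oo --> (0 : 'cV[R[i]]_n.+1)) /\
  Tinf = Binf /\ Tinf *m e = 0 /\ adjmx e *m Tinf = 0.
Proof.
move=> he ht hT0 T Q a b B y.
split; first exact: T_cvg.
move=> Tinf' Binf'.
split; first by move=> k; apply: part1.
split; first by apply: series_cvg.
split; first by apply: series_lim.
split; first by apply: y_cvg0.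
split; first by apply: a_cvg0.
split; first by apply: b_cvg0.
split; first by apply: Tinf_Q.
split; first by apply: Tinf_e0.
by apply: eTinf0.
Qed.
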